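(* For any $1\le\alpha\le\mathcal N$ and $g\in\mathbb C[x_1^{\pm1},\dots,x_\alpha^{\pm1}]^{S(\alpha)}$, \[\iota\big(\Phi(\widetilde E_\alpha(g))\big)=\theta^{\alpha(\mathcal N-\alpha)}\,\mathcal A_\alpha(P),\qquad P(x_1,\dots,x_\alpha)=g(\mathfrak q^{-1/2}x_1^{-1},\dots,\mathfrak q^{-1/2}x_\alpha^{-1}).\]
   Context: Let $\mathfrak q,\mathfrak t\in\mathbb C^\times$ with $q_1=\mathfrak q$, $q_2=1/\mathfrak t$, $q_3=\mathfrak t/\mathfrak q$ not roots of unity; fix square roots $\theta=\mathfrak t^{1/2}$, $\mathfrak q^{1/2}$, $q_2^{1/2}$. Fix $\mathcal N\ge1$. $\widetilde{\mathcal A}$ is the $\mathbb C$-algebra generated by $D_r^{\pm1},w_r^{\pm1}$ ($1\le r\le\mathcal N$), all commuting except $D_rw_s=q_1^{\delta_{rs}}w_sD_r$, localized at $w_r-q_1^mw_s$ ($r\ne s$). $\mathcal B$ is the $\mathbb C$-algebra generated by $x_i^{\pm1},\Gamma_i^{\pm1}$ ($1\le i\le\mathcal N$), all commuting except $\Gamma_ix_i=\mathfrak q x_i\Gamma_i$, localized at $x_i-\mathfrak q^mx_j$ ($i\ne j$); $\iota:\widetilde{\mathcal A}\to\mathcal B$ is the isomorphism $w_i^{\pm1}\mapsto x_i^{\mp1}\mathfrak q^{\mp1/2}$, $D_i^{\pm1}\mapsto\Gamma_i^{\mp1}$. Let $\zeta(z/w)=\frac{\prod_{i=1}^3(z-q_i^{-1}w)}{(z-w)^3}$,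 $\varphi(z/w)=\frac{(q_1^{1/2}z-q_1^{-1/2}w)(q_2^{1/2}z-q_2^{-1/2}w)}{(z-w)^2}$. $\mathbb S=\bigoplus_k\mathbb S_k$, $\mathbb S_k$ the space of $f/\prod_{r\ne s}(x_r-x_s)$ with $f$ a symmetric complex Laurent polynomial in $x_1,\dots,x_k$, with shuffle product $F\star G=\frac{1}{k!\ell!}\mathrm{Sym}(F(x_1..x_k)G(x_{k+1}..x_{k+\ell})\prod_{r\le k<r'}\zeta(x_r/x_{r'}))$. With $Y_r(z)=\frac{-1}{1-q_1^{-1}}\prod_{s\ne r}\frac{z-w_sq_2^{-1}}{z-w_s}$, the map $\Phi:\mathbb S\to\widetilde{\mathcal A}$ is defined on $E\in\mathbb S_k$ by $\Phi(E)=\sum_{m_1+\dots+m_{\mathcal N}=k}\{\prod_r\prod_{p\le m_r}Y_r(w_rq_1^{-(p-1)})\cdot E(\{w_rq_1^{-(p-1)}\}_r^{p\le m_r})\prod_r\prod_{p_1<p_2\le m_r}\zeta^{-1}(\frac{w_rq_1^{-(p_1-1)}}{w_rq_1^{-(p_2-1)}})\prod_{r_1\ne r_2}\prod_{p_1\le m_{r_1},p_2\le m_{r_2}}\varphi^{-1}(\frac{w_{r_1}q_1^{-(p_1-1)}}{w_{r_2}q_1^{-(p_2-1)}})\prod_rD_r^{-m_r}\}$ ($m_r\in\mathbb N$). $\widetilde E_\alpha(g)=q_3^{\frac{\alpha-\alpha^2}2}(q_1^{-1}-1)^\alpha\frac{\prod_{1\le r\ne s\le\alpha}(x_r-q_1^{-1}x_s)\,g(x_1,\dots,x_\alpha)}{\prod_{1\le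 r\ne s\le\alpha}(x_r-x_s)}\in\mathbb S_\alpha$. For a symmetric Laurent polynomial $P$ in $\alpha$ variables, the generalized Macdonald operator is $\mathcal A_\alpha(P)=\frac{1}{\alpha!(\mathcal N-\alpha)!}\mathrm{Sym}_{x_1,\dots,x_{\mathcal N}}\Big(P(x_1,\dots,x_\alpha)\prod_{1\le i\le\alpha<j\le\mathcal N}\frac{\theta x_i-\theta^{-1}x_j}{x_i-x_j}\Gamma_1\cdots\Gamma_\alpha\Big)\in\mathcal B$, where Sym permutes the indices $1,\dots,\mathcal N$ of the $x_i$ and $\Gamma_i$ simultaneously. *)

(* Defs.v *)
From HB Require Import structures.
From mathcomp Require Import all_boot all_order all_algebra all_fingroup.
From mathcomp Require Import mpoly.
Set Implicit Arguments. Unset Strict Implicit. Unset Printing Implicit Defensive.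
Import Order.TTheory GRing.Theory Num.Theory.
Local Open Scope ring_scope.

(*  * a rational function in N variables is represented by a total function *)
(*    ('I_N -> C) -> C computed by field operations; two of them are equal  *)
(*    as rational functions iff they agree outside the zero set of some     *)
(*    nonzero polynomial ([rat_eq]);                                         *)
(*  * an element of A~ (resp. B) is written in the normal form              *)
(*    sum_e f_e(w) D^e  (resp. sum_e f_e(x) Gamma^e), coefficients on the    *)
(*    left, e in Z^N; it is represented by the family e |-> f_e ([opalg]).   *)

Section Defs.
Variable C : numClosedFieldType.

Definition ratfun (N : nat) := ('I_N -> C) -> C.

Definition rat_eq (N : nat) (f g : ratfun N) : Prop :=
  exists Q : {mpoly C[N]}, Q != 0 /\ forall x : 'I_N -> C, Q.@[x] != 0 -> f x = g x.

Definition opalg (N : nat) := ('I_N -> int) -> ratfun N.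

Definition op_eq (N : nat) (A B : opalg N) : Prop := forall e, rat_eq (A e) (B e).

Definition opscale (N : nat) (c : C) (A : opalg N) : opalg N := fun e x => c * A e x.

Variables (q t : C).
Definition q1 : C := q.
Definition q2 : C := t^-1.
Definition q3 : C := t / q.

Variables (qh q2h theta : C). (* q^{1/2} = q1^{1/2}, q2^{1/2}, theta = t^{1/2} *)

(* zeta(z/w) and phi(z/w) *)
Definition zeta (z w : C) : C :=
  (z - q1^-1 * w) * (z - q2^-1 * w) * (z - q3^-1 * w) / (z - w) ^+ 3.
Definition phi (z w : C) : C :=
  (qh * z - qh^-1 * w) * (q2h * z - q2h^-1 * w) / (z - w) ^+ 2.

Definition Yr (N : nat) (w : 'I_N -> C) (r : 'I_N) (z : C) : C :=
  - (1 - q1^-1)^-1 * \prod_(s < N | s != r) ((z - w s * q2^-1) / (z - w s)).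

(* the points {w_r q1^{-(p-1)}}_r^{p <= m_r} (here p runs from 0) *)
Definition Phi_pts (N : nat) (m : 'I_N -> nat) (w : 'I_N -> C) : seq C :=
  flatten [seq [seq w r * q1 ^- p | p <- iota 0 (m r)] | r <- enum 'I_N].

(* the coefficient of D^{-m} in Phi(E) *)
Definition Phi_coef (N : nat) (E : seq C -> C) (m : 'I_N -> nat) (w : 'I_N -> C) : C :=
  (\prod_(r < N) \prod_(p < m r) Yr w r (w r * q1 ^- p)) *
  E (Phi_pts m w) *
  (\prod_(r < N) \prod_(p1 < m r) \prod_(p2 < m r | (p1 < p2)%N)
      (zeta (w r * q1 ^- p1) (w r * q1 ^- p2))^-1) *
  (\prod_(r1 < N) \prod_(r2 < N | r1 != r2) \prod_(p1 < m r1) \prod_(p2 < m r2)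
      (phi (w r1 * q1 ^- p1) (w r2 * q1 ^- p2))^-1).

(* Phi : S_k -> A~, for E in S_k given as a function of its k arguments
   (a symmetric function, so it is evaluated on a list of the k points) *)
Definition Phi (N k : nat) (E : seq C -> C) : opalg N :=
  fun e w =>
    if [forall r, e r <= 0] && (\sum_(r < N) absz (e r) == k)%N
    then Phi_coef E (fun r => absz (e r)) w else 0.

(* iota : A~ -> B,  w_r |-> x_r^{-1} q^{-1/2},  D_r^{-1} |-> Gamma_r *)
Definition iotaAB (N : nat) (A : opalg N) : opalg N :=
  fun e x => A (fun r => - e r) (fun r => (x r)^-1 * qh^-1).

(* symmetric Laurent polynomial g = p / (x_1 ... x_a)^d *)
Definition laurent_eval (a : nat) (p : {mpoly C[a]}) (d : nat) (y : 'I_a -> C) : C :=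
  p.@[y] / (\prod_(i < a) y i) ^+ d.

Definition Etilde (a : nat) (p : {mpoly C[a]}) (d : nat) (xs : seq C) : C :=
  let x := fun i : 'I_a => nth 0 xs i in
  q3 ^- ((a * (a - 1)) %/ 2) * (q1^-1 - 1) ^+ a *
  (\prod_(r < a) \prod_(s < a | s != r) (x r - q1^-1 * x s)) * laurent_eval p d x /
  (\prod_(r < a) \prod_(s < a | s != r) (x r - x s)).

Definition Pg (a : nat) (p : {mpoly C[a]}) (d : nat) (y : 'I_a -> C) : C :=
  laurent_eval p d (fun i => qh^-1 * (y i)^-1).

Definition Amac (N a : nat) (P : ('I_a -> C) -> C) : opalg N :=
  fun e x =>
    ((a`!)%:R * ((N - a)`!)%:R)^-1 *
    \sum_(s : 'S_N)
      (if [forall j, e j == (if ((s^-1)%g j < a)%N then 1%Z else 0%Z)]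
       then P (fun i : 'I_a => nth 0 [seq x (s j) | j <- enum 'I_N] i) *
            \prod_(i < N | (i < a)%N) \prod_(j < N | (a <= j)%N)
              ((theta * x (s i) - theta^-1 * x (s j)) / (x (s i) - x (s j)))
       else 0).

End Defs.

(* Main.v *)
Require Import Defs.
From HB Require Import structures.
From mathcomp Require Import all_boot all_order all_algebra all_fingroup.
From mathcomp Require Import ring mpoly zify.
Import Order.TTheory GRing.Theory Num.Theory.
Set Implicit Arguments. Unset Strict Implicit. Unset Printing Implicit Defensive.

Section Count.
Variables (N a : nat).
Hypothesis ha2 : a <= N.

Definition Bs (s : 'S_N) : {set 'I_N} := [set j | (s^-1)%g j < a].

Lemma card_Bs s : #|Bs s| = a.
Proof.
rewrite -sum1_card (eq_bigl (fun j => (s^-1)%g j < a)); last by move=> j; rewrite inE.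
rewrite (reindex_inj (@perm_inj _ s)) /=.
rewrite (eq_bigl (fun i : 'I_N => i < a)); last by move=> i; rewrite -permM mulgV perm1.
by rewrite -(@big_ord_widen_cond _ 0 addn a N xpredT (fun _ => 1)) // sum1_card card_ord.
Qed.

Lemma exists_Bs (S : {set 'I_N}) : #|S| = a -> exists s, Bs s = S.
Proof.
move=> cS.
pose l := enum S ++ enum (~: S).
have sl : size l = N by rewrite size_cat -!cardE cardsC card_ord.
have inl j : j \in l by rewrite mem_cat !mem_enum inE; case: (j \in S).
have lt j : index j l < N by rewrite -[X in _ < X]sl index_mem.
pose f j := Ordinal (lt j).
have injf : injective f.
  move=> j k /(congr1 val) /= E.
  by rewrite -(nth_index j (inl j)) E nth_index.
exists (perm injf)^-1%g; apply/setP => j; rewrite inE invgK permE /=.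
rewrite /l index_cat mem_enum; case: (boolP (j \in S)) => jS.
  by rewrite -cS cardE index_mem mem_enum.
by rewrite -cardE cS ltnNge leq_addr.
Qed.

Lemma Bs_move (s s0 s1 : 'S_N) : Bs s = Bs s0 -> Bs (s * ((s0^-1) * s1))%g = Bs s1.
Proof.
move=> E; apply/setP => j; rewrite !inE invMg permM invMg invgK permM.
have := congr1 (fun X : {set 'I_N} => s0 ((s1^-1)%g j) \in X) E; rewrite /= !inE => ->.
by rewrite -permM mulgV perm1.
Qed.

Lemma cnt_le (S0 S1 : {set 'I_N}) : #|S0| = a -> #|S1| = a ->
  #|[set s | Bs s == S0]| <= #|[set s | Bs s == S1]|.
Proof.
move=> c0 c1; have [s0 E0] := exists_Bs c0; have [s1 E1] := exists_Bs c1.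
rewrite -(card_imset _ (@mulIg _ ((s0^-1) * s1)%g)).
apply: subset_leq_card; apply/subsetP => x /imsetP [s].
rewrite !inE => /eqP Es ->.
by rewrite Bs_move ?E1 // Es E0.
Qed.

Lemma cnt_Bs (S : {set 'I_N}) : #|S| = a -> #|[set s | Bs s == S]| = (a`! * (N - a)`!)%N.
Proof.
move=> cS.
pose c S := #|[set s | Bs s == S]|.
have ceq (S' : {set 'I_N}) : #|S'| = a -> c S' = c S.
  by move=> c'; apply/eqP; rewrite eqn_leq !cnt_le.
have sumc : \sum_(S' in [set S' : {set 'I_N} | #|S'| == a]) c S' = N`!.
  rewrite -card_Sn.
  transitivity (\sum_(S' in [set S' : {set 'I_N} | #|S'| == a]) \sum_(s : 'S_N) (Bs s == S' : nat)).
    apply: eq_bigr => S' _; rewrite /c -sum1_card big_mkcond /=.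
    by apply: eq_bigr => s _; rewrite inE; case: (Bs s == S').
  rewrite exchange_big /= -sum1_card; apply: eq_bigr => s _.
  rewrite (bigD1 (Bs s)) /=; last by rewrite inE card_Bs.
  rewrite eqxx big1 // => S' /andP [_ H]; by rewrite eq_sym (negbTE H).
have : ('C(N, a) * c S = 'C(N, a) * (a`! * (N - a)`!))%N.
  rewrite bin_fact // -sumc.
  rewrite (eq_bigr (fun _ => c S)); last by move=> S'; rewrite inE => /eqP /ceq.
  by rewrite sum_nat_const card_draws card_ord mulnC.
by move/eqP; rewrite eqn_pmul2l ?bin_gt0 // => /eqP.
Qed.

End Count.
Local Open Scope ring_scope.
Section Pairs.
Variable C : fieldType.

Lemma prod_lt_const (a : nat) (i : 'I_a) (c : C) : \prod_(j < a | (j < i)%N) c = c ^+ i.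
Proof.
rewrite -(@big_ord_widen_cond _ 1 *%R i a xpredT (fun _ => c)) ?(ltnW (ltn_ord i)) //.
by rewrite prodr_const card_ord.
Qed.

Lemma ord_split (a : nat) (i j : 'I_a) :
  [/\ ((j != i) && (j < i)%N) = (j < i)%N & ((j != i) && ~~ (j < i)%N) = (i < j)%N].
Proof.
case: (ltngtP j i) => h; rewrite ?andbT ?andbF.
- by split=> //; apply/eqP => E; move: h; rewrite E ltnn.
- by split=> //; apply/eqP => E; move: h; rewrite E ltnn.
- have E : j = i by apply: val_inj.
  by rewrite E eqxx.
Qed.

Lemma prod_pairs (a : nat) (F : 'I_a -> 'I_a -> C) (c : C) :
  (forall i j, i != j -> F i j * F j i = c) ->
  \prod_(i < a) \prod_(j < a | j != i) F i j = c ^+ (a * (a - 1) %/ 2).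
Proof.
move=> H.
have split i : \prod_(j < a | j != i) F i j =
   \prod_(j < a | (j < i)%N) F i j * \prod_(j < a | (i < j)%N) F i j.
  rewrite (bigID (fun j : 'I_a => (j < i)%N)) /=; congr (_ * _); apply: eq_bigl => j.
    by case: (ord_split i j).
  by case: (ord_split i j).
rewrite (eq_bigr _ (fun i _ => split i)) big_split /=.
rewrite [X in _ * X](exchange_big_dep xpredT) //=.
rewrite -big_split /=.
rewrite (eq_bigr (fun i : 'I_a => c ^+ i)); last first.
  move=> i _; rewrite -big_split /= -(prod_lt_const i c); apply: eq_bigr => j hj.
  by apply: H; apply/eqP => E; move: hj; rewrite E ltnn.
rewrite -(big_morph _ (@exprD _ c) (expr0 c)); congr (_ ^+ _).
rewrite -(big_mkord xpredT (fun i => i)) bin2_sum bin2 subn1 divn2.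
by [].
Qed.
End Pairs.
Section Alg.
Variable C : fieldType.

Lemma Yf_id (X Y qh th : C) : X != 0 -> Y != 0 -> X - Y != 0 -> qh != 0 -> th != 0 ->
 (X^-1 * qh^-1 - Y^-1 * qh^-1 * (th^+2)^-1^-1) / (X^-1 * qh^-1 - Y^-1 * qh^-1)
   = th * ((th * X - th^-1 * Y) / (X - Y)).
Proof.
move=> hX hY hXY hq hth.
have hYX : Y - X != 0 by rewrite -opprB oppr_eq0.
by field; rewrite mulN1r hXY hth hq hY hX hYX oner_eq0.
Qed.

Lemma nz_aux (u x y : C) : u != 0 -> u * x - u^-1 * y != 0 -> u * x * u - y != 0.
Proof.
move=> hu h; have -> : u * x * u - y = (u * x - u^-1 * y) * u by field.
by rewrite mulf_neq0.
Qed.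

Lemma pair_id (a b qh u : C) : a - b != 0 -> qh != 0 -> u != 0 ->
  qh * a - qh^-1 * b != 0 -> qh * b - qh^-1 * a != 0 ->
  u * a - u^-1 * b != 0 -> u * b - u^-1 * a != 0 ->
  let q := qh ^+ 2 in let t := (u ^+ 2)^-1 in
  let phi z w := (qh * z - qh^-1 * w) * (u * z - u^-1 * w) / (z - w) ^+ 2 in
  ((a - b * t^-1^-1)/(a - b)) * ((a - q^-1 * b)/(a-b)) * (phi a b)^-1 *
  (((b - a * t^-1^-1)/(b - a)) * ((b - q^-1 * a)/(b-a)) * (phi b a)^-1) = t / q.
Proof.
move=> h1 h2 h3 h4 h5 h6 h7 q t phi; rewrite /phi /q /t.
have hba : b - a != 0 by rewrite -opprB oppr_eq0.
by field; rewrite h2 h3 hba !nz_aux // oner_eq0 h1.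
Qed.
End Alg.
Section Aux.
Variable C : numClosedFieldType.

Lemma meval_msym n (p : {mpoly C[n]}) (s : 'S_n) (v : 'I_n -> C) :
  (msym s p).@[v] = p.@[fun i => v (s i)].
Proof.
rewrite [in LHS](mpolyE p) [in RHS](mpolyE p) (raddf_sum (msym s)) !raddf_sum.
apply: eq_bigr => m _ /=; rewrite (msymZ (p@_m) ('X_[m]) s).
rewrite !mevalZ msymX !mevalX; congr (_ * _).
rewrite (reindex_inj (@perm_inj _ s)) /=.
by apply: eq_bigr => i _; rewrite mnmE permK.
Qed.

Lemma meval_sym_perm n (p : {mpoly C[n]}) (s : 'S_n) (v : 'I_n -> C) :
  p \is symmetric -> p.@[fun i => v (s i)] = p.@[v].
Proof. by move=> /issymP H; rewrite -meval_msym H. Qed.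

Lemma exists_perm_of n m (g1 g2 : 'I_n -> 'I_m) :
  injective g1 -> (forall i, exists j, g2 j = g1 i) ->
  exists s : 'S_n, forall i, g1 i = g2 (s i).
Proof.
move=> inj1 H.
pose f i := odflt i [pick j | g2 j == g1 i].
have fP i : g2 (f i) = g1 i.
  rewrite /f; case: pickP => [j /eqP //|Hn].
  by case: (H i) => j Hj; move: (Hn j); rewrite Hj eqxx.
have injf : injective f by move=> i i' E; apply: inj1; rewrite -!fP E.
by exists (perm injf) => i; rewrite permE fP.
Qed.

Lemma laurent_eval_sym n (p : {mpoly C[n]}) d (s : 'S_n) (v : 'I_n -> C) :
  p \is symmetric -> laurent_eval p d (fun i => v (s i)) = laurent_eval p d v.
Proof.
move=> Hs; rewrite /laurent_eval meval_sym_perm //; congr (_ / _ ^+ _).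
by rewrite [RHS](reindex_inj (@perm_inj _ s)).
Qed.

Lemma laurent_eval_eq n (p : {mpoly C[n]}) d (v1 v2 : 'I_n -> C) :
  v1 =1 v2 -> laurent_eval p d v1 = laurent_eval p d v2.
Proof.
move=> E; rewrite /laurent_eval (meval_eq p E); congr (_ / _ ^+ _).
by apply: eq_bigr => i _; rewrite E.
Qed.

Lemma laurent_eval_inj n m (p : {mpoly C[n]}) d (g1 g2 : 'I_n -> 'I_m) (w : 'I_m -> C) :
  p \is symmetric -> injective g1 -> (forall i, exists j, g2 j = g1 i) ->
  laurent_eval p d (fun i => w (g1 i)) = laurent_eval p d (fun i => w (g2 i)).
Proof.
move=> Hs inj1 H; have [s Hsg] := exists_perm_of inj1 H.
rewrite -(laurent_eval_sym d s (fun i => w (g2 i)) Hs).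
by apply: laurent_eval_eq => i; rewrite Hsg.
Qed.

Lemma XsubZ_neq0 n (i j : 'I_n) (c : C) : i != j -> ('X_i - c *: 'X_j : {mpoly C[n]}) != 0.
Proof.
move=> hij; apply/eqP => /(congr1 (mcoeff U_(i))).
rewrite mcoeffB mcoeffZ !mcoeffXU mcoeff0 eqxx eq_sym (negbTE hij) mulr0 subr0.
by move/eqP; rewrite oner_eq0.
Qed.

End Aux.
Section Lists.
Variable C : numClosedFieldType.
Variables (q t : C) (N : nat).

Lemma Phi_pts_S (m : 'I_N -> nat) (S : {set 'I_N}) (w : 'I_N -> C) :
  (forall r, m r = (r \in S) :> nat) ->
  Phi_pts q m w = [seq w r | r <- [seq r <- enum 'I_N | r \in S]].
Proof.
move=> Hm; rewrite /Phi_pts; elim: (enum 'I_N) => //= r rs IH.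
rewrite Hm; case: (r \in S) => /=; last exact: IH.
by rewrite expr0 invr1 mulr1 IH.
Qed.

Lemma size_Phi_pts (m : 'I_N -> nat) (w : 'I_N -> C) :
  size (Phi_pts q m w) = (\sum_(r < N) m r)%N.
Proof.
rewrite /Phi_pts size_flatten /shape -map_comp sumnE big_map.
rewrite big_enum /=; apply: eq_bigr => r _ /=; by rewrite size_map size_iota.
Qed.

Lemma mem_Phi_pts (m : 'I_N -> nat) (w : 'I_N -> C) r k :
  (k < m r)%N -> w r * q1 q ^- k \in Phi_pts q m w.
Proof.
move=> hk; apply/flatten_mapP; exists r; first by rewrite mem_enum.
by apply: map_f; rewrite mem_iota.
Qed.

Lemma Etilde_zero a (p : {mpoly C[a]}) d (L : seq C) (y : C) :
  size L = a -> y \in L -> y * (q1 q)^-1 \in L -> y * (q1 q)^-1 != y ->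
  Etilde q t p d L = 0.
Proof.
move=> sL yL yqL hne.
have hi : (@seq.index C (y * (q1 q)^-1)%R L < a)%N by rewrite -sL seq.index_mem.
have hj : (@seq.index C y L < a)%N by rewrite -sL seq.index_mem.
have hij : Ordinal hj != Ordinal hi.
  apply/eqP => /(congr1 (fun k : 'I_a => nth 0 L k)) /=.
  rewrite !nth_index // => E.
  by move: hne; rewrite -E eqxx.
rewrite /Etilde /=.
rewrite (bigD1 (Ordinal hi)) //= (bigD1 (Ordinal hj)) //=.
rewrite !nth_index //.
have E0 : y / q1 q - (q1 q)^-1 * y = 0 by rewrite mulrC subrr.
by rewrite E0 !(mul0r, mulr0).
Qed.

End Lists.
Section Reidx.
Variable C : numClosedFieldType.
Variables (N a : nat) (ha2 : (a <= N)%N) (s : 'S_N) (S : {set 'I_N}).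
Hypothesis hS : Bs a s = S.

Let g (i : 'I_a) : 'I_N := s (widen_ord ha2 i).

Lemma g_inj : injective g.
Proof. by move=> i j /perm_inj /(congr1 val) /= E; apply: val_inj. Qed.

Lemma memS u : (u \in S) = ((s^-1)%g u < a)%N.
Proof. by rewrite -hS inE. Qed.

Lemma g_in i : g i \in S.
Proof. by rewrite memS /g permK /=. Qed.

Lemma g_onto u : u \in S -> exists i, g i = u.
Proof.
rewrite memS => h; exists (Ordinal h); rewrite /g.
have -> : widen_ord ha2 (Ordinal h) = (s^-1)%g u by apply: val_inj.
by rewrite permKV.
Qed.

Lemma reidxS (P : pred 'I_N) (H : 'I_N -> C) :
  \prod_(u | (u \in S) && P u) H u = \prod_(i < a | P (g i)) H (g i).
Proof.
rewrite (reindex_inj (@perm_inj _ s)) /=.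
rewrite (eq_bigl (fun k => P (s k) && (k < a)%N)); last first.
  by move=> k; rewrite memS permK andbC.
by rewrite (big_ord_narrow_cond ha2).
Qed.

Lemma reidxS1 (H : 'I_N -> C) :
  \prod_(u | u \in S) H u = \prod_(i < a) H (g i).
Proof. by rewrite -(eq_bigl _ _ (fun u => andbT (u \in S))) reidxS. Qed.

Lemma reidxSc (H : 'I_N -> C) :
  \prod_(k < N | (a <= k)%N) H (s k) = \prod_(v | v \notin S) H v.
Proof.
rewrite [RHS](reindex_inj (@perm_inj _ s)) /=; apply: eq_bigl => k.
by rewrite memS permK -leqNgt.
Qed.

End Reidx.
Section Alg2.
Variable C : fieldType.

Lemma pair_id2 (a b q t qh u : C) : qh ^+ 2 = q -> u ^+ 2 = t^-1 ->
  a - b != 0 -> qh != 0 -> u != 0 ->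
  qh * a - qh^-1 * b != 0 -> qh * b - qh^-1 * a != 0 ->
  u * a - u^-1 * b != 0 -> u * b - u^-1 * a != 0 ->
  let phi z w := (qh * z - qh^-1 * w) * (u * z - u^-1 * w) / (z - w) ^+ 2 in
  ((a - b * t^-1^-1)/(a - b)) * ((a - q^-1 * b)/(a-b)) * (phi a b)^-1 *
  (((b - a * t^-1^-1)/(b - a)) * ((b - q^-1 * a)/(b-a)) * (phi b a)^-1) = t / q.
Proof.
move=> hq hu h1 h2 h3 h4 h5 h6 h7 phi.
have ht : t = (u ^+ 2)^-1 by rewrite hu invrK.
rewrite ht -hq; exact: pair_id.
Qed.

Lemma nzW (X Y qh k : C) : X != 0 -> Y != 0 -> qh != 0 -> k != 0 -> X - k ^+ 2 * Y != 0 ->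
  k * (X^-1 * qh^-1) - k^-1 * (Y^-1 * qh^-1) != 0.
Proof.
move=> hX hY hq hk h.
have -> : k * (X^-1 * qh^-1) - k^-1 * (Y^-1 * qh^-1) = - (X - k ^+ 2 * Y) / (k * X * Y * qh).
  field.
  by rewrite hq hY hX hk.
by rewrite mulf_neq0 ?oppr_eq0 ?invr_eq0 ?mulf_neq0.
Qed.

Lemma nzW1 (X Y qh : C) : X != 0 -> Y != 0 -> qh != 0 -> X - Y != 0 ->
  X^-1 * qh^-1 - Y^-1 * qh^-1 != 0.
Proof.
move=> hX hY hq h.
have -> : X^-1 * qh^-1 - Y^-1 * qh^-1 = - (X - Y) / (X * Y * qh).
  by field; rewrite hq hY hX.
by rewrite mulf_neq0 ?oppr_eq0 ?invr_eq0 ?mulf_neq0.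
Qed.

Lemma prod_pairs_perm (a : nat) (F : 'I_a -> 'I_a -> C) (s : 'S_a) :
  \prod_(i < a) \prod_(j < a | j != i) F (s i) (s j) = \prod_(i < a) \prod_(j < a | j != i) F i j.
Proof.
rewrite [RHS](reindex_inj (@perm_inj _ s)) /=; apply: eq_bigr => i _.
rewrite [RHS](reindex_inj (@perm_inj _ s)) /=; apply: eq_bigl => j.
by rewrite (inj_eq (@perm_inj _ s)).
Qed.

End Alg2.
Section Main.
Variables (C : numClosedFieldType) (q t qh q2h theta : C).
Hypotheses (hq : q != 0) (ht : t != 0) (hq1 : q != 1)
  (htheta : theta ^+ 2 = t) (hqh : qh ^+ 2 = q) (hq2h : q2h ^+ 2 = q2 t).
Variables (N a : nat) (ha1 : (1 <= a)%N) (ha2 : (a <= N)%N) (p : {mpoly C[a]}) (d : nat).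
Hypothesis hp : p \is symmetric.
Variable x : 'I_N -> C.
Hypothesis hx0 : forall i, x i != 0.
Hypothesis hxx : forall i j, i != j -> [/\ x i - x j != 0, x i - q * x j != 0 & x i - t^-1 * x j != 0].

Let w (r : 'I_N) := (x r)^-1 * qh^-1.

Lemma qh_neq0 : qh != 0.
Proof. by move: hq; rewrite -hqh expf_eq0 /=. Qed.
Lemma q2h_neq0 : q2h != 0.
Proof. by move: ht; rewrite -invr_eq0 -[t^-1]/(q2 t) -hq2h expf_eq0 /=. Qed.
Lemma theta_neq0 : theta != 0.
Proof. by move: ht; rewrite -htheta expf_eq0 /=. Qed.

Lemma caseA (m : 'I_N -> nat) (S : {set 'I_N}) (s : 'S_N) :
  (forall r, m r = (r \in S) :> nat) -> Bs a s = S ->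
  Phi_coef q t qh q2h (Etilde q t p d) m w =
  theta ^+ (a * (N - a)) *
  (Pg qh p d (fun i : 'I_a => nth 0 [seq x (s j) | j <- enum 'I_N] i) *
   \prod_(i < N | (i < a)%N) \prod_(j < N | (a <= j)%N)
      ((theta * x (s i) - theta^-1 * x (s j)) / (x (s i) - x (s j)))).
Proof.
move=> Hm hS.
pose g (i : 'I_a) : 'I_N := s (widen_ord ha2 i).
pose W i := w (g i).
have cS : #|S| = a by rewrite -hS (card_Bs ha2).
have cSc : #|~: S| = (N - a)%N by rewrite -[in RHS](card_ord N) -(cardsC S) cS addKn.
have ginj : injective g := @g_inj _ _ ha2 s.
have gin i : g i \in S := g_in ha2 hS i.
rewrite /Phi_coef.
have HY : \prod_(r < N) \prod_(p0 < m r) Yr q t w r (w r * q1 q ^- p0) =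
          \prod_(i < a) Yr q t w (g i) (W i).
  rewrite (eq_bigr (fun r => if r \in S then Yr q t w r (w r) else 1)); last first.
    by move=> r _; rewrite Hm; case: (r \in S); rewrite ?big_ord1 ?big_ord0 ?expr0 ?invr1 ?mulr1.
  by rewrite -big_mkcond (reidxS1 ha2 hS).
rewrite HY.
pose Yf (z y : C) := (z - y * (q2 t)^-1) / (z - y).
have HYr i : Yr q t w (g i) (W i) = - (1 - (q1 q)^-1)^-1 *
   (\prod_(v | v \notin S) Yf (W i) (w v) * \prod_(j < a | j != i) Yf (W i) (W j)).
  rewrite /Yr; congr (_ * _); rewrite (bigID (fun v => v \in S)) /= mulrC; congr (_ * _).
    apply: eq_bigl => v; case vS: (v \in S); rewrite ?andbF ?andbT //=.
    by apply/eqP => E; move: vS; rewrite E gin.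
  rewrite (eq_bigl (fun v => (v \in S) && (v != g i))); last by move=> v; rewrite andbC.
  rewrite (reidxS ha2 hS (fun v => v != g i)); apply: eq_bigl => j.
  by rewrite (inj_eq ginj).
rewrite (eq_bigr _ (fun i _ => HYr i)) {HYr HY}.
have HZ : \prod_(r < N) \prod_(p1 < m r) \prod_(p2 < m r | (p1 < p2)%N)
      (zeta q t (w r * q1 q ^- p1) (w r * q1 q ^- p2))^-1 = 1.
  rewrite big1 // => r _; rewrite big1 // => p1 _; rewrite big1 // => p2 hp12.
  have : (m r <= 1)%N by rewrite Hm; case: (r \in S).
  by move: (ltn_ord p2) hp12; lia.
rewrite HZ mulr1 {HZ}.
have HP : \prod_(r1 < N) \prod_(r2 < N | r1 != r2) \prod_(p1 < m r1) \prod_(p2 < m r2)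
     (phi qh q2h (w r1 / q1 q ^+ p1) (w r2 / q1 q ^+ p2))^-1 =
     \prod_(i < a) \prod_(j < a | j != i) (phi qh q2h (W i) (W j))^-1.
  rewrite (eq_bigr (fun r1 => if r1 \in S then
      \prod_(r2 | (r2 \in S) && (r2 != r1)) (phi qh q2h (w r1) (w r2))^-1 else 1)); last first.
    move=> r1 _; rewrite Hm; case: (r1 \in S).
      rewrite (eq_bigr (fun r2 => if r2 \in S then (phi qh q2h (w r1) (w r2))^-1 else 1)); last first.
        by move=> r2 _; rewrite big_ord1 Hm; case: (r2 \in S); rewrite ?big_ord1 ?big_ord0 ?expr0 ?invr1 ?mulr1.
      rewrite -big_mkcondr; apply: eq_bigl => r2; by rewrite andbC eq_sym.
    by rewrite big1 // => r2 _; rewrite big_ord0.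
  rewrite -big_mkcond (reidxS1 ha2 hS); apply: eq_bigr => i _.
  rewrite (reidxS ha2 hS (fun v => v != g i)); apply: eq_bigl => j.
  by rewrite (inj_eq ginj).
rewrite HP {HP}.
pose F := [seq r <- enum 'I_N | r \in S].
rewrite (Phi_pts_S q w Hm) -/F.
have uF : uniq F by rewrite filter_uniq // enum_uniq.
have memF u : (u \in F) = (u \in S) by rewrite mem_filter mem_enum andbT.
have sF : size F = a.
  move/card_uniqP: uF => <-; rewrite -cS; apply: eq_card => u; exact: memF.
pose r0 := g (Ordinal ha1).
pose g' (i : 'I_a) := nth r0 F i.
have g'inj : injective g'.
  move=> i j /eqP; rewrite /g' nth_uniq ?sF // => /eqP E; exact: val_inj.
have g'in i : g' i \in S by rewrite -memF /g' mem_nth ?sF.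
have onto i : exists j, g j = g' i := g_onto ha2 hS (g'in i).
have [σ Hσ] := exists_perm_of g'inj onto.
have hn (i : 'I_a) : [seq w r | r <- F]`_i = W (σ i) by rewrite /W -Hσ (nth_map r0) ?sF.
have HE : Etilde q t p d [seq w r | r <- F] =
   q3 q t ^- ((a * (a - 1)) %/ 2) * ((q1 q)^-1 - 1) ^+ a *
   \prod_(i < a) \prod_(j < a | j != i) (W i - (q1 q)^-1 * W j) * laurent_eval p d W /
   \prod_(i < a) \prod_(j < a | j != i) (W i - W j).
  rewrite /Etilde /=; congr (_ * _ * _ * _ / _).
  - transitivity (\prod_(i < a) \prod_(j < a | j != i) (W (σ i) - (q1 q)^-1 * W (σ j))).
      by apply: eq_bigr => i _; apply: eq_bigr => j _; rewrite !hn.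
    exact: (prod_pairs_perm (fun i j => W i - (q1 q)^-1 * W j) σ).
  - rewrite (@laurent_eval_eq _ _ _ _ _ (fun i => w (g' i))); last by move=> i; rewrite (nth_map r0) ?sF.
    exact: (laurent_eval_inj d w hp g'inj onto).
  - transitivity (\prod_(i < a) \prod_(j < a | j != i) (W (σ i) - W (σ j))).
      by apply: eq_bigr => i _; apply: eq_bigr => j _; rewrite !hn.
    exact: (prod_pairs_perm (fun i j => W i - W j) σ).
rewrite HE {HE}.
have HPg : Pg qh p d (fun i : 'I_a => [seq x (s j) | j <- enum 'I_N]`_i) = laurent_eval p d W.
  rewrite /Pg; apply: laurent_eval_eq => i.
  have hiN : (i < N)%N := leq_trans (ltn_ord i) ha2.
  rewrite (nth_map r0) ?size_enum_ord //.
  have -> : nth r0 (enum 'I_N) i = widen_ord ha2 i by apply: val_inj; rewrite /= nth_enum_ord.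
  by rewrite /W /w /g mulrC.
rewrite HPg {HPg}.
pose h (u v : C) := (theta * u - theta^-1 * v) / (u - v).
have HH : \prod_(i < N | (i < a)%N) \prod_(j < N | (a <= j)%N)
    ((theta * x (s i) - theta^-1 * x (s j)) / (x (s i) - x (s j))) =
    \prod_(i < a) \prod_(v | v \notin S) h (x (g i)) (x v).
  rewrite (eq_bigr (fun i => \prod_(v | v \notin S) h (x (s i)) (x v))); last first.
    by move=> i _; rewrite (reidxSc hS (fun v => h (x (s i)) (x v))).
  by rewrite (eq_bigl (fun i : 'I_N => xpredT i && (i < a)%N)) // (big_ord_narrow_cond ha2).
rewrite HH {HH}.
have hqh0 := qh_neq0; have hq2h0 := q2h_neq0; have hth0 := theta_neq0.
have hgg i j : i != j -> g i != g j by move=> hij; rewrite (inj_eq ginj).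
have hth : \prod_(v | v \notin S) theta = theta ^+ (N - a).
  by rewrite (eq_bigl (fun v => v \in ~: S)) => [|v]; [rewrite prodr_const cSc | rewrite inE].
have HA : \prod_(i < a) \prod_(v | v \notin S) Yf (W i) (w v) =
    theta ^+ (a * (N - a)) * \prod_(i < a) \prod_(v | v \notin S) h (x (g i)) (x v).
  transitivity (\prod_(i < a) \prod_(v | v \notin S) (theta * h (x (g i)) (x v))).
    apply: eq_bigr => i _; apply: eq_bigr => v hv.
    have hne : g i != v by apply/eqP => E; move: hv; rewrite -E gin.
    have [h1 _ _] := hxx hne.
    rewrite /Yf /W /w /q2 -htheta /h; exact: Yf_id.
  under eq_bigr do rewrite big_split /= hth.
  by rewrite big_split /= prodr_const card_ord -exprM mulnC.
pose Fp (i j : 'I_a) := Yf (W i) (W j) * ((W i - (q1 q)^-1 * W j) / (W i - W j)) *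
   (phi qh q2h (W i) (W j))^-1.
have HF : \prod_(i < a) \prod_(j < a | j != i) Yf (W i) (W j) *
   (\prod_(i < a) \prod_(j < a | j != i) (W i - (q1 q)^-1 * W j) /
    \prod_(i < a) \prod_(j < a | j != i) (W i - W j)) *
   \prod_(i < a) \prod_(j < a | j != i) (phi qh q2h (W i) (W j))^-1 = q3 q t ^+ ((a * (a - 1)) %/ 2).
  rewrite -(prod_pairs (F := Fp)) => [|i j hij]; last first.
    have [h1 h2 h3] := hxx (hgg _ _ hij).
    have [h1' h2' h3'] := hxx (hgg _ _ (negbT (introF eqP (fun E => (negP hij) (introT eqP (esym E)))))).
    have hq2h' : q2h ^+ 2 = t^-1 by [].
    apply: (pair_id2 hqh hq2h' _ hqh0 hq2h0).
    - exact: nzW1.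
    - by apply: nzW => //; rewrite hqh.
    - by apply: nzW => //; rewrite hqh.
    - by apply: nzW => //; rewrite hq2h'.
    - by apply: nzW => //; rewrite hq2h'.
  rewrite /Fp; symmetry.
  under eq_bigr => i _ do rewrite big_split big_split
     (@prodf_div _ _ _ _ (fun j => W i - (q1 q)^-1 * W j) (fun j => W i - W j)).
  rewrite big_split big_split.
  by rewrite (@prodf_div _ _ _ _ (fun i => \prod_(j < a | j != i) (W i - (q1 q)^-1 * W j))
     (fun i => \prod_(j < a | j != i) (W i - W j))).
rewrite big_split big_split prodr_const card_ord HA.
have HK : - (1 - (q1 q)^-1)^-1 * ((q1 q)^-1 - 1) = 1.
  have h1 : 1 - (q1 q)^-1 != 0.
    by rewrite subr_eq0 eq_sym invr_eq1.
  by rewrite mulNr -mulrN opprB mulVf.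
have hq3 : q3 q t != 0 by rewrite /q3 mulf_neq0 ?invr_eq0.
set M := ((a * (a - 1)) %/ 2)%N.
set LE := laurent_eval p d W.
set H := \prod_(i < a) \prod_(v | v \notin S) h (x (g i)) (x v).
set Ain := \prod_(i < a) \prod_(j < a | j != i) Yf (W i) (W j).
set En := \prod_(i < a) \prod_(j < a | j != i) (W i - (q1 q)^-1 * W j).
set Ed := \prod_(i < a) \prod_(j < a | j != i) (W i - W j).
set Ph := \prod_(i < a) \prod_(j < a | j != i) (phi qh q2h (W i) (W j))^-1.
transitivity ((- (1 - (q1 q)^-1)^-1 * ((q1 q)^-1 - 1)) ^+ a * (q3 q t ^- M * (Ain * (En / Ed) * Ph)) *
   (theta ^+ (a * (N - a)) * (LE * H))).
  have EM : forall u v : C, GRing.GRing_mul__canonical__Monoid_ComLaw C u v = u * v by [].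
  rewrite !EM [(_ * ((q1 q)^-1 - 1)) ^+ a]exprMn; ring.
by rewrite HF HK expr1n mul1r mulVf ?expf_neq0 // mul1r.
Qed.

End Main.

Section Final.
Variable C : numClosedFieldType.

Definition Qpoly (N : nat) (q t : C) : {mpoly C[N]} :=
  \prod_(i < N) ('X_i * \prod_(j < N | j != i)
     (('X_i - 1 *: 'X_j) * ('X_i - q *: 'X_j) * ('X_i - t^-1 *: 'X_j))).

Lemma X_neq0 N (i : 'I_N) : ('X_i : {mpoly C[N]}) != 0.
Proof.
apply/eqP => /(congr1 (mcoeff U_(i))); rewrite mcoeffXU eqxx mcoeff0.
by move/eqP; rewrite oner_eq0.
Qed.

Lemma Qpoly_neq0 N q t : Qpoly N q t != 0.
Proof.
apply/prodf_neq0 => i _; rewrite mulf_neq0 ?X_neq0 //.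
apply/prodf_neq0 => j hj; rewrite !mulf_neq0 // XsubZ_neq0 // eq_sym //.
Qed.

Lemma Qpoly_eval N q t (x : 'I_N -> C) : (Qpoly N q t).@[x] != 0 ->
  (forall i, x i != 0) /\
  (forall i j, i != j -> [/\ x i - x j != 0, x i - q * x j != 0 & x i - t^-1 * x j != 0]).
Proof.
rewrite /Qpoly rmorph_prod => /prodf_neq0 H.
have H' i := H i isT; split.
  by move=> i; move: (H' i); rewrite rmorphM /= mevalXU mulf_eq0 negb_or => /andP [].
move=> i j hij; move: (H' i); rewrite rmorphM /= mulf_eq0 negb_or => /andP [_].
rewrite rmorph_prod => /prodf_neq0 /(_ j); rewrite eq_sym => /(_ hij).
rewrite !rmorphM /= !mevalB !mevalZ !mevalXU mul1r !mulf_eq0 !negb_or.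
by case/andP => /andP [-> ->] ->.
Qed.

Lemma sum_mem_card N (A : {set 'I_N}) : (\sum_(r < N) ((r \in A) : nat) = #|A|)%N.
Proof.
rewrite -sum1_card [RHS]big_mkcond; apply: eq_bigr => r _; by case: (r \in A).
Qed.

End Final.

Unset Implicit Arguments.
Theorem proposition7p9 (C : numClosedFieldType) (q t qh q2h theta : C)
  (hq : q != 0) (ht : t != 0)
  (hq1 : forall n : nat, (0 < n)%N -> q1 q ^+ n != 1)
  (hq2 : forall n : nat, (0 < n)%N -> q2 t ^+ n != 1)
  (hq3 : forall n : nat, (0 < n)%N -> q3 q t ^+ n != 1)
  (htheta : theta ^+ 2 = t) (hqh : qh ^+ 2 = q) (hq2h : q2h ^+ 2 = q2 t)
  (N : nat) (hN : (1 <= N)%N)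
  (a : nat) (ha1 : (1 <= a)%N) (ha2 : (a <= N)%N)
  (p : {mpoly C[a]}) (d : nat) (hp : p \is symmetric) :
  op_eq
    (@iotaAB C qh N (@Phi C q t qh q2h N a (Etilde q t p d)))
    (opscale (theta ^+ (a * (N - a))) (@Amac C theta N a (Pg qh p d))).
Proof.
have hq1' : q != 1 by move: (hq1 1%N isT); rewrite expr1.
move=> e; exists (Qpoly N q t); split; first exact: Qpoly_neq0.
move=> x /Qpoly_eval [hx0 hxx].
rewrite /iotaAB /opscale /Phi /Amac /=.
pose T (s : 'S_N) := Pg qh p d (fun i : 'I_a => [seq x (s j) | j <- enum 'I_N]`_i) *
        \prod_(i < N | (i < a)%N)
           \prod_(j < N | (a <= j)%N)
              ((theta * x (s i) - theta^-1 * x (s j)) / (x (s i) - x (s j))).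
rewrite -/T.
have hth0 : theta ^+ (a * (N - a)) != 0.
  by rewrite expf_neq0 //; move: ht; rewrite -htheta expf_eq0 /=.
have hqh0 : qh != 0 by move: hq; rewrite -hqh expf_eq0 /=.
case: ifP => hc.
- move/andP: hc => [/forallP hneg /eqP hsum].
  pose m r := `|- e r|%N.
  have he r : e r = (m r)%:Z.
    by rewrite /m abszN abszE ger0_norm // -oppr_le0; exact: hneg.
  rewrite -/m in hsum *.
  case: (boolP [exists r, (1 < m r)%N]) => [/existsP [r hr] | /existsPn hall].
  + have hw : (x r)^-1 / qh != 0 by rewrite mulf_neq0 ?invr_eq0.
    rewrite /Phi_coef (@Etilde_zero _ q t a p d _ ((x r)^-1 / qh)).
    * rewrite mulr0 mul0r mul0r big1 ?mulr0 // => s _.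
      case: ifP => // /forallP H; exfalso; move: (H r) hr; rewrite he.
      by case: ifP => _ /eqP [] ->.
    * by rewrite size_Phi_pts.
    * have := mem_Phi_pts q (fun r => (x r)^-1 / qh) (k := 0) (r := r) (m := m).
      by rewrite expr0 invr1 mulr1; apply; lia.
    * have := mem_Phi_pts q (fun r => (x r)^-1 / qh) (k := 1) (r := r) (m := m).
      by rewrite expr1; apply.
    * apply/eqP => E.
      have : (x r)^-1 / qh * ((q1 q)^-1 - 1) = 0 by rewrite mulrBr mulr1 E subrr.
      apply/eqP; rewrite mulf_neq0 // subr_eq0 invr_eq1 //.
  + have hm1 r : (m r <= 1)%N by move: (hall r); rewrite ltnNge negbK.
    set S := [set r | m r == 1%N].
    have Hm r : m r = (r \in S) :> nat.
      by rewrite inE; move: (hm1 r); case: (m r) => [|[|]].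
    clearbody S.
    have cS : #|S| = a by rewrite -sum_mem_card -hsum; apply: eq_bigr => r _; exact: (esym (Hm r)).
    have hcond (s : 'S_N) : [forall j, e j == (if ((s^-1)%g j < a)%N then 1%Z else 0%Z)] = (Bs a s == S).
      apply/forallP/eqP => [H | E].
        apply/setP => j; move: (H j); rewrite he Hm inE.
        by case: (j \in S); case: ((s^-1)%g j < a)%N.
      by move=> j; rewrite he Hm -E inE; case: ((s^-1)%g j < a)%N.
    have [s0 hs0] := exists_Bs cS.
    have hA (s : 'S_N) : Bs a s = S -> Phi_coef q t qh q2h (Etilde q t p d) m (fun r => (x r)^-1 / qh)
          = theta ^+ (a * (N - a)) * T s.
      by move=> hS; apply: (caseA hq ht hq1' htheta hqh hq2h ha1 ha2 d hp hx0 hxx Hm hS).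
    rewrite (hA s0 hs0); congr (_ * _).
    rewrite (eq_bigr (fun s => if Bs a s == S then T s0 else 0)); last first.
      move=> s _; rewrite hcond; case: eqP => // E.
      by apply: (mulfI hth0); rewrite -hA // -hA.
    rewrite -big_mkcond /= (eq_bigl (fun s => s \in [set s | Bs a s == S])); last first.
      by move=> s; rewrite inE.
    rewrite sumr_const (cnt_Bs ha2 cS) -[T s0 *+ _]mulr_natr natrM mulrC mulfK //.
    by rewrite mulf_neq0 // pnatr_eq0 -lt0n fact_gt0.
- rewrite big1 ?mulr0 // => s _; case: ifP => // /forallP H; exfalso.
  have he j : e j = (if ((s^-1)%g j < a)%N then 1%Z else 0%Z) by apply/eqP; exact: H.
  suff : [forall r, - e r <= 0] && ((\sum_(r < N) `|- e r|)%N == a) by rewrite hc.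
  apply/andP; split.
    by apply/forallP => r; rewrite he; case: ifP.
  rewrite -(card_Bs ha2 s) -sum_mem_card; apply/eqP; apply: eq_bigr => r _.
  by rewrite he inE; case: ifP.
Qed.
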